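(* Let $r>0$, $\sigma\ge0$, $\kappa>0$, $\tau>0$, $p\in[0,1]$ with $\varepsilon=pe^{-\tau}<1$, and $q_c=1-\frac{1}{r}\frac{1}{1-\varepsilon}$. Let $\eta,q\in\mathbb{R}$, $u(\eta,q)=(1-\eta-q,\eta,0,q)$, and let $\mathcal{F}^*_{\eta,q}=\{\phi\in\mathcal{C}^*: H^*(\phi)=H^*(\widehat{u(\eta,q)})\}$ be the level set of $H^*=(H_1^*,H_2^* )$ containing $\widehat{u(\eta,q)}$. Then: (1) $\mathcal{F}^*_{\eta,q}\cap\mathcal{E}^*_0=\{\widehat{u(\eta,q)}\}$. (2) $\mathcal{F}^*_{\eta,q}\cap\mathcal{E}^*_I=\{\widehat{v(\eta,q)}\}$, where $v(\eta,q)=(v_S,v_E(\eta,q),v_I(\eta,q),v_Q(\eta,q))$ with $v_S=\frac{1}{r(1-\varepsilon)}$ and \[ v_E(\eta,q)=\frac{\sigma}{1-\varepsilon+\sigma+\varepsilon\kappa}(q_c-q-\eta)+\eta,\qquad v_I(\eta,q)=\frac{1-\varepsilon}{1-\varepsilon+\sigma+\varepsilon\kappa}(q_c-q-\eta), \] \[ v_Q(\eta,q)=\frac{\varepsilon\kappa}{1-\varepsilon+\sigma+\varepsilon\kappa}(q_c-q-\eta)+q. \]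
   Context: The SEIQ system is \[ \dot S(t)=-rS(t)I(t)+I(t)+r\varepsilon S(t-\sigma-\tau-\kappa)I(t-\sigma-\tau-\kappa),\qquad \dot E(t)=rS(t)I(t)-rS(t-\sigma)I(t-\sigma), \] \[ \dot I(t)=rS(t-\sigma)I(t-\sigma)-I(t)-r\varepsilon S(t-\sigma-\tau)I(t-\sigma-\tau), \] \[ \dot Q(t)=r\varepsilon\big[S(t-\sigma-\tau)I(t-\sigma-\tau)-S(t-\sigma-\tau-\kappa)I(t-\sigma-\tau-\kappa)\big], \] on $\mathcal{C}^*=\{\phi\in C([-\sigma-\tau-\kappa,0],\mathbb{R}^4):\phi_S+\phi_E+\phi_I+\phi_Q\equiv1\}$. For $u\in\mathbb{R}^4$, $\hat u$ is the constant function with value $u$. $\mathcal{E}^*_0=\{\hat\phi\in\mathcal{C}^*\text{ constant}:\phi_I=0\}$ and $\mathcal{E}^*_I=\{\hat\phi\in\mathcal{C}^*\text{ constant}:\phi_S=\frac{1}{r(1-\varepsilon)}\}$. The functionals are $H_1^*(\phi)=1-\phi_S(0)-\phi_E(0)-\phi_I(-\kappa)+\int_{-\kappa}^{0}\phi_I(s)ds-r\int_{-\sigma-\kappa}^{-\sigma}\phi_S(s)\phi_I(s)ds$ and $H_2^*(\phi)=\phi_E(0)-r\int_{-\sigma}^{0}\phi_S(s)\phi_I(s)ds$. *)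

(* Defs.v *)
From Stdlib Require Import Reals.
From Coquelicot Require Import Coquelicot.
Open Scope R_scope.

(* An element phi of C([-sigma-tau-kappa,0], R^4), given by its four
   components (only their values on the interval matter). *)
Record fn4 := Fn4 { pS : R -> R; pE : R -> R; pI : R -> R; pQ : R -> R }.

Record vec4 := Vec4 { vS : R; vE : R; vI : R; vQ : R }.

Definition hist (sigma tau kappa : R) (s : R) : Prop :=
  - sigma - tau - kappa <= s <= 0.

Definition inCstar (sigma tau kappa : R) (phi : fn4) : Prop :=
  let D := hist sigma tau kappa in
  continuous_on D (pS phi) /\ continuous_on D (pE phi) /\
  continuous_on D (pI phi) /\ continuous_on D (pQ phi) /\
  forall s, D s -> pS phi s + pE phi s + pI phi s + pQ phi s = 1.

Definition eqC (sigma tau kappa : R) (phi psi : fn4) : Prop :=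
  forall s, hist sigma tau kappa s ->
    pS phi s = pS psi s /\ pE phi s = pE psi s /\
    pI phi s = pI psi s /\ pQ phi s = pQ psi s.

Definition hat (u : vec4) : fn4 :=
  Fn4 (fun _ => vS u) (fun _ => vE u) (fun _ => vI u) (fun _ => vQ u).

Definition is_const (sigma tau kappa : R) (phi : fn4) (c : vec4) : Prop :=
  eqC sigma tau kappa phi (hat c).

Definition inE0 (sigma tau kappa : R) (phi : fn4) : Prop :=
  inCstar sigma tau kappa phi /\
  exists c, is_const sigma tau kappa phi c /\ vI c = 0.

Definition inEI (r eps sigma tau kappa : R) (phi : fn4) : Prop :=
  inCstar sigma tau kappa phi /\
  exists c, is_const sigma tau kappa phi c /\ vS c = 1 / (r * (1 - eps)).

Definition H1 (r sigma kappa : R) (phi : fn4) : R :=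
  1 - pS phi 0 - pE phi 0 - pI phi (- kappa)
  + RInt (pI phi) (- kappa) 0
  - r * RInt (fun s => pS phi s * pI phi s) (- sigma - kappa) (- sigma).

Definition H2 (r sigma : R) (phi : fn4) : R :=
  pE phi 0 - r * RInt (fun s => pS phi s * pI phi s) (- sigma) 0.

Definition u_eq (eta q : R) : vec4 := Vec4 (1 - eta - q) eta 0 q.

Definition inF (r sigma tau kappa eta q : R) (phi : fn4) : Prop :=
  inCstar sigma tau kappa phi /\
  H1 r sigma kappa phi = H1 r sigma kappa (hat (u_eq eta q)) /\
  H2 r sigma phi = H2 r sigma (hat (u_eq eta q)).

Definition v_eq (r eps sigma kappa eta q : R) : vec4 :=
  let qc := 1 - (1 / r) * (1 / (1 - eps)) in
  let D := 1 - eps + sigma + eps * kappa in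
  Vec4 (1 / (r * (1 - eps)))
       (sigma / D * (qc - q - eta) + eta)
       ((1 - eps) / D * (qc - q - eta))
       (eps * kappa / D * (qc - q - eta) + q).

(* Main.v *)
Require Import Defs.
From Stdlib Require Import Reals Lra.
From Coquelicot Require Import Coquelicot.
Open Scope R_scope.

Lemma cont_const (D : R -> Prop) (a : R) : continuous_on D (fun _ : R => a).
Proof. intros x _. apply filterlim_const. Qed.

Lemma inCstar_hat sigma tau kappa c :
  vS c + vE c + vI c + vQ c = 1 -> inCstar sigma tau kappa (hat c).
Proof.
  intros H. unfold inCstar; simpl.
  repeat split; try apply cont_const. intros; exact H.
Qed.

Lemma RInt_c (a b c : R) : RInt (fun _ => c) a b = (b - a) * c.
Proof. rewrite RInt_const. reflexivity. Qed.

Lemma H1_hat r sigma kappa c :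
  H1 r sigma kappa (hat c) =
  1 - vS c - vE c - vI c + kappa * vI c - r * (kappa * (vS c * vI c)).
Proof.
  unfold H1, hat; simpl. rewrite !RInt_c. ring.
Qed.

Lemma H2_hat r sigma c :
  H2 r sigma (hat c) = vE c - r * (sigma * (vS c * vI c)).
Proof.
  unfold H2, hat; simpl. rewrite !RInt_c. ring.
Qed.

Lemma H_eqC r sigma tau kappa phi c :
  0 <= sigma -> 0 <= tau -> 0 < kappa ->
  eqC sigma tau kappa phi (hat c) ->
  H1 r sigma kappa phi = H1 r sigma kappa (hat c) /\
  H2 r sigma phi = H2 r sigma (hat c).
Proof.
  intros hs ht hk He.
  assert (h0 : hist sigma tau kappa 0) by (unfold hist; lra).
  assert (hk' : hist sigma tau kappa (-kappa)) by (unfold hist; lra).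
  destruct (He 0 h0) as [e1 [e2 [e3 e4]]].
  destruct (He (-kappa) hk') as [f1 [f2 [f3 f4]]].
  simpl in *.
  split.
  - unfold H1. rewrite e1, e2, f3.
    assert (R1 : RInt (pI phi) (- kappa) 0 = RInt (fun _ => vI c) (-kappa) 0).
    { apply RInt_ext. intros x Hx. rewrite Rmin_left in Hx by lra.
      rewrite Rmax_right in Hx by lra.
      destruct (He x) as [_ [_ [g _]]]; [unfold hist; lra| exact g]. }
    assert (R2 : RInt (fun s => pS phi s * pI phi s) (- sigma - kappa) (- sigma)
       = RInt (fun _ => vS c * vI c) (- sigma - kappa) (- sigma)).
    { apply RInt_ext. intros x Hx. rewrite Rmin_left in Hx by lra.
      rewrite Rmax_right in Hx by lra.
      destruct (He x) as [g1 [_ [g3 _]]]; [unfold hist; lra|]. simpl in *.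
      rewrite g1, g3; reflexivity. }
    rewrite R1, R2. reflexivity.
  - unfold H2. rewrite e2.
    assert (R2 : RInt (fun s => pS phi s * pI phi s) (- sigma) 0
       = RInt (fun _ => vS c * vI c) (- sigma) 0).
    { apply RInt_ext. intros x Hx. rewrite Rmin_left in Hx by lra.
      rewrite Rmax_right in Hx by lra.
      destruct (He x) as [g1 [_ [g3 _]]]; [unfold hist; lra|]. simpl in *.
      rewrite g1, g3; reflexivity. }
    rewrite R2. reflexivity.
Qed.

Lemma eqC_of sigma tau kappa phi c u :
  Defs.is_const sigma tau kappa phi c ->
  vS c = vS u -> vE c = vE u -> vI c = vI u -> vQ c = vQ u ->
  eqC sigma tau kappa phi (hat u).
Proof.
  intros Hk a b d e s hs. destruct (Hk s hs) as [g1 [g2 [g3 g4]]]. simpl in *.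
  rewrite g1, g2, g3, g4. auto.
Qed.

Theorem theorem12 (r sigma kappa tau p : R)
  (hr : 0 < r) (hsigma : 0 <= sigma) (hkappa : 0 < kappa) (htau : 0 < tau)
  (hp : 0 <= p <= 1) (heps : p * exp (- tau) < 1) (eta q : R) :
  let eps := p * exp (- tau) in
  (* (1) F ∩ E0 = { hat u(eta,q) } *)
  (inCstar sigma tau kappa (hat (u_eq eta q)) /\
   forall phi,
     (inF r sigma tau kappa eta q phi /\ inE0 sigma tau kappa phi) <->
     (inCstar sigma tau kappa phi /\
      eqC sigma tau kappa phi (hat (u_eq eta q)))) /\
  (* (2) F ∩ EI = { hat v(eta,q) } *)
  (inCstar sigma tau kappa (hat (v_eq r eps sigma kappa eta q)) /\
   forall phi,
     (inF r sigma tau kappa eta q phi /\ inEI r eps sigma tau kappa phi) <->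
     (inCstar sigma tau kappa phi /\
      eqC sigma tau kappa phi (hat (v_eq r eps sigma kappa eta q)))).
Proof.
  intros eps.
  assert (he0 : 0 <= eps).
  { unfold eps. apply Rmult_le_pos; [lra| left; apply exp_pos]. }
  assert (he1 : eps < 1) by exact heps.
  set (D := 1 - eps + sigma + eps * kappa).
  assert (hD : 0 < D) by (unfold D; nra).
  assert (ht0 : 0 <= tau) by lra.
  assert (h0 : hist sigma tau kappa 0) by (unfold hist; lra).
  assert (Hu1 : H1 r sigma kappa (hat (u_eq eta q)) = q)
    by (rewrite H1_hat; simpl; ring).
  assert (Hu2 : H2 r sigma (hat (u_eq eta q)) = eta)
    by (rewrite H2_hat; simpl; ring).
  set (v := v_eq r eps sigma kappa eta q).
  set (qc := 1 - (1 / r) * (1 / (1 - eps))).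
  assert (hvS : vS v = 1 / (r * (1 - eps))) by reflexivity.
  assert (hvE : vE v = sigma / D * (qc - q - eta) + eta) by reflexivity.
  assert (hvI : vI v = (1 - eps) / D * (qc - q - eta)) by reflexivity.
  assert (hvQ : vQ v = eps * kappa / D * (qc - q - eta) + q) by reflexivity.
  assert (hsum : vS v + vE v + vI v + vQ v = 1).
  { rewrite hvS, hvE, hvI, hvQ. unfold qc, D in *. field. lra. }
  assert (Hv1 : H1 r sigma kappa (hat v) = q).
  { rewrite H1_hat, hvS, hvE, hvI. unfold qc, D in *. field. lra. }
  assert (Hv2 : H2 r sigma (hat v) = eta).
  { rewrite H2_hat, hvS, hvE, hvI. unfold qc, D in *. field. lra. }
  split; split.
  - apply inCstar_hat; simpl; ring.
  - intros phi; split.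
    + intros [[Hc [E1 E2]] [_ [c [Hk HI]]]]. split; [exact Hc|].
      destruct (H_eqC r sigma tau kappa phi c hsigma ht0 hkappa Hk) as [A B].
      rewrite A, H1_hat, Hu1 in E1. rewrite B, H2_hat, Hu2 in E2.
      assert (Hs : vS c + vE c + vI c + vQ c = 1).
      { destruct Hc as [_ [_ [_ [_ Hc]]]]. specialize (Hc 0 h0).
        destruct (Hk 0 h0) as [g1 [g2 [g3 g4]]]. simpl in *. lra. }
      rewrite HI in E1, E2, Hs. rewrite !Rmult_0_r in E1, E2.
      apply (eqC_of _ _ _ _ c); [exact Hk| simpl; lra ..].
    + intros [Hc He]. destruct (H_eqC r sigma tau kappa phi _ hsigma ht0 hkappa He) as [A B].
      split; [split; [exact Hc|] | split; [exact Hc| exists (u_eq eta q); split; [exact He| reflexivity]]].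
      split; congruence.
  - apply inCstar_hat; exact hsum.
  - intros phi; split.
    + intros [[Hc [E1 E2]] [_ [c [Hk HS]]]]. split; [exact Hc|].
      destruct (H_eqC r sigma tau kappa phi c hsigma ht0 hkappa Hk) as [A B].
      rewrite A, H1_hat, Hu1 in E1. rewrite B, H2_hat, Hu2 in E2.
      assert (Hs : vS c + vE c + vI c + vQ c = 1).
      { destruct Hc as [_ [_ [_ [_ Hc]]]]. specialize (Hc 0 h0).
        destruct (Hk 0 h0) as [g1 [g2 [g3 g4]]]. simpl in *. lra. }
      assert (hrs : r * vS c = 1 / (1 - eps)) by (rewrite HS; field; lra).
      assert (E1' : 1 - vS c - vE c - vI c + kappa * vI c
                    - kappa * vI c / (1 - eps) = q).
      { rewrite <- E1. replace (r * (kappa * (vS c * vI c)))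
          with (kappa * vI c * (r * vS c)) by ring. rewrite hrs. field. lra. }
      assert (E2' : vE c - sigma * vI c / (1 - eps) = eta).
      { rewrite <- E2. replace (r * (sigma * (vS c * vI c)))
          with (sigma * vI c * (r * vS c)) by ring. rewrite hrs. field. lra. }
      assert (hqc : qc = 1 - vS c) by (unfold qc; rewrite HS; field; lra).
      assert (HI : vI c = (1 - eps) / D * (qc - q - eta)).
      { assert (K : vI c * D = (1 - eps) * (qc - q - eta)).
        { rewrite hqc. unfold D.
          assert (Z : (1 - eps) * (1 - vS c - vE c - vI c + kappa * vI c
                    - kappa * vI c / (1 - eps)) = (1 - eps) * q) by (rewrite E1'; ring).
          assert (Z2 : (1 - eps) * (vE c - sigma * vI c / (1 - eps)) = (1 - eps) * eta)
            by (rewrite E2'; ring).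
          field_simplify in Z; [|lra]. field_simplify in Z2; [|lra]. nra. }
        apply (Rmult_eq_reg_r D); [| lra]. rewrite K. field. lra. }
      assert (hE : vE c = eta + sigma * vI c / (1 - eps)) by lra.
      assert (hQ : vQ c = 1 - vS c - vE c - vI c) by lra.
      apply (eqC_of _ _ _ _ c); [exact Hk | rewrite HS, hvS; reflexivity | | | ].
      * rewrite hvE, hE, HI. field. lra.
      * rewrite hvI, HI. reflexivity.
      * rewrite hvQ, hQ, hE, HI. replace (1 - vS c) with qc by lra. unfold D in *. field. split; lra.
    + intros [Hc He]. destruct (H_eqC r sigma tau kappa phi _ hsigma ht0 hkappa He) as [A B].
      split; [split; [exact Hc|] | split; [exact Hc| exists v; split; [exact He| exact hvS]]].
      split; congruence.
Qed.
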